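(* Let $\epsilon > 0$, $M \geq 1$, and let $I,J \subset \mathbb{R}$ be intervals with $|I| > 2M^{2}\sqrt{|J|} + 4M\epsilon$. If $F \colon Q := I \times J \to \mathbb{W}$ is a horizontal $(M,\epsilon)$-quasi-isometric embedding, then the induced map $f \colon (J,\|\cdot\|) \to (\mathbb{R},\|\cdot\|)$, $f(t) := \pi_{2}(F(y,t))$ (for any $y \in I$), is an $(M,2\epsilon)$-quasi-isometric embedding.
   Context: $\mathbb{W}$ is $\mathbb{R}^{2}$ with the metric $d_{\mathrm{par}}((y,t),(\xi,\tau)) = \max\{|y-\xi|,|t-\tau|^{1/2}\}$; $\pi_{1}(y,t) = y$, $\pi_{2}(y,t) = t$; horizontal lines in $\mathbb{W}$ are the sets $\mathbb{R} \times \{t\}$. $\|x-y\| := \sqrt{|x-y|}$ denotes the square root metric on $\mathbb{R}$. A map $F \colon (X,d) \to (Y,d')$ is an $(M,\epsilon)$-quasi-isometric embedding if $M^{-1}d(x,y) - \epsilon \leq d'(F(x),F(y)) \leq Md(x,y) + \epsilon$ for all $x,y$. For a rectangle $Q = I \times J$, a map $F \colon Q \to \mathbb{W}$ is a horizontal $(M,\epsilon)$-quasi-isometric embedding if it is an $(M,\epsilon)$-quasi-isometric embedding with respect to $d_{\mathrm{par}}$ and for every $t \in J$ there is a horizontal line $\ell_{t} \subset \mathbb{W}$ with $F(I \times \{t\}) \subset \ell_{t}$ (so $f$ is well defined). *)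

(* Defs.v *)
From Stdlib Require Import Reals Lra.
From Coquelicot Require Import Coquelicot.
Open Scope R_scope.

Definition W := (R * R)%type.
Definition d_par (p q : W) : R :=
  Rmax (Rabs (fst p - fst q)) (sqrt (Rabs (snd p - snd q))).
Definition pi1 (p : W) : R := fst p.
Definition pi2 (p : W) : R := snd p.

Definition sqrt_dist (x y : R) : R := sqrt (Rabs (x - y)).

Definition is_interval (S : R -> Prop) : Prop :=
  forall x y z, S x -> S z -> x <= y -> y <= z -> S y.

Definition ilength (S : R -> Prop) : Rbar :=
  Lub_Rbar (fun d => exists x y, S x /\ S y /\ d = Rabs (x - y)).

Definition qi_embedding {X Y : Type} (D : X -> Prop) (d : X -> X -> R)
  (d' : Y -> Y -> R) (F : X -> Y) (M eps : R) : Prop :=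
  forall x y, D x -> D y ->
    / M * d x y - eps <= d' (F x) (F y) /\ d' (F x) (F y) <= M * d x y + eps.

Definition rect (I J : R -> Prop) (p : R * R) : Prop := I (fst p) /\ J (snd p).

Definition horizontal_line (l : W -> Prop) : Prop :=
  exists t, forall p, l p <-> pi2 p = t.

Definition horizontal_qi_embedding (I J : R -> Prop) (F : R * R -> W)
  (M eps : R) : Prop :=
  qi_embedding (rect I J) d_par d_par F M eps /\
  forall t, J t -> exists l, horizontal_line l /\
    forall y, I y -> l (F (y, t)).

(* Main.v *)
Require Import Defs.
From Stdlib Require Import Reals Lra.
From Coquelicot Require Import Coquelicot.
Open Scope R_scope.

Lemma conn_step (I : R -> Prop) (g : R -> R) (M eps v eta : R) :
  0 < eps -> 0 < M -> M * eta = eps / 2 ->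
  (forall y y', I y -> I y' -> Rabs (g y - g y') <= M * Rabs (y - y') + eps) ->
  (forall y, I y -> eps < Rabs (g y - v)) ->
  forall x y, I x -> I y -> Rabs (x - y) <= eta -> (v < g x <-> v < g y).
Proof.
  intros he hM hMe hL hG x y hx hy hxy.
  pose proof (hL x y hx hy) as L.
  assert (M * Rabs (x - y) <= M * eta) by (apply Rmult_le_compat_l; lra).
  pose proof (hG x hx) as G1. pose proof (hG y hy) as G2.
  revert H L G1 G2; unfold Rabs; repeat destruct Rcase_abs; intros; split; intro; lra.
Qed.

Lemma coarse_conn (I : R -> Prop) (g : R -> R) (M eps v : R) :
  is_interval I -> 0 < eps -> 0 < M ->
  (forall y y', I y -> I y' -> Rabs (g y - g y') <= M * Rabs (y - y') + eps) ->
  (forall y, I y -> eps < Rabs (g y - v)) ->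
  forall a b, I a -> I b -> (v < g a <-> v < g b).
Proof.
  intros hI he hM hL hG.
  set (eta := eps / (2 * M)).
  assert (heta : 0 < eta) by (unfold eta; apply Rdiv_lt_0_compat; lra).
  assert (hMe : M * eta = eps / 2) by (unfold eta; field; lra).
  assert (main : forall a b, I a -> I b -> a <= b -> (v < g a <-> v < g b)).
  { intros a b ha hb hab.
    set (p := fun k : nat => Rmin b (a + INR k * eta)).
    assert (hp : forall k, I (p k) /\ a <= p k <= b /\ (v < g a <-> v < g (p k))).
    { induction k as [|k IH].
      - unfold p; simpl. rewrite Rmult_0_l, Rplus_0_r, Rmin_right by lra.
        split; [exact ha | split; [lra | tauto]].
      - destruct IH as [Ik [[Ik1 Ik2] Ek]].
        assert (hb1 : a <= p (S k) <= b).
        { unfold p. rewrite S_INR. pose proof (pos_INR k).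
          unfold Rmin; destruct Rle_dec; split; try lra.
          nra. }
        assert (Ik' : I (p (S k))).
        { apply (hI a (p (S k)) b); tauto. }
        assert (hd : Rabs (p k - p (S k)) <= eta).
        { unfold p. rewrite S_INR.
          unfold Rmin; repeat destruct Rle_dec; unfold Rabs; destruct Rcase_abs; lra. }
        split; [exact Ik' | split; [exact hb1|]].
        rewrite Ek. exact (conn_step I g M eps v eta he hM hMe hL hG _ _ Ik Ik' hd). }
    destruct (INR_archimed eta (b - a) heta) as [N hN].
    assert (p N = b) by (unfold p; apply Rmin_left; lra).
    destruct (hp N) as [_ [_ E]]. rewrite H in E. exact E. }
  intros a b ha hb. destruct (Rle_or_lt a b).
  - apply main; auto; lra.
  - apply iff_sym, main; auto; lra.
Qed.

Lemma Rmax_cases (a b : R) : (Rmax a b = a /\ b <= a) \/ (Rmax a b = b /\ a <= b).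
Proof. unfold Rmax; destruct Rle_dec; [right | left]; split; auto; lra. Qed.

Theorem lemma3p13 (eps M : R) (I J : R -> Prop) (LJ : R) (F : R * R -> W) :
  0 < eps -> 1 <= M ->
  is_interval I -> is_interval J ->
  ilength J = Finite LJ ->
  Rbar_lt (Finite (2 * M ^ 2 * sqrt LJ + 4 * M * eps)) (ilength I) ->
  horizontal_qi_embedding I J F M eps ->
  forall y0, I y0 ->
    qi_embedding J sqrt_dist sqrt_dist (fun t => pi2 (F (y0, t))) M (2 * eps).
Proof.
  intros he hM hI hJ hLJ hlen [hqi hhor] y0 hy0 s t hs ht.
  assert (hM0 : 0 < M) by lra.
  assert (hiM : 0 < / M) by (apply Rinv_0_lt_compat; lra).
  assert (hf : forall y tau, I y -> J tau -> snd (F (y, tau)) = snd (F (y0, tau))).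
  { intros y tau hy htau. destruct (hhor tau htau) as [l [[c hc] hl]].
    pose proof (hl y hy) as A. pose proof (hl y0 hy0) as B.
    apply hc in A. apply hc in B. unfold pi2 in A, B. congruence. }
  unfold sqrt_dist, pi2. simpl.
  set (X := sqrt (Rabs (s - t))).
  set (D := sqrt (Rabs (snd (F (y0, s)) - snd (F (y0, t))))).
  assert (hX0 : 0 <= X) by apply sqrt_pos.
  assert (hD0 : 0 <= D) by apply sqrt_pos.
  assert (hXts : sqrt (Rabs (t - s)) = X) by (unfold X; rewrite Rabs_minus_sym; reflexivity).
  assert (hLip : forall tau, J tau -> forall y y', I y -> I y' ->
            Rabs (fst (F (y, tau)) - fst (F (y', tau))) <= M * Rabs (y - y') + eps).
  { intros tau htau y y' hy hy'.
    destruct (hqi (y, tau) (y', tau)) as [_ U]; try (split; simpl; assumption).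
    unfold d_par in U; simpl in U. rewrite Rminus_diag, Rabs_R0, sqrt_0 in U.
    rewrite (Rmax_left _ 0) in U by apply Rabs_pos.
    rewrite hf, (hf y' tau) in U by assumption. rewrite Rminus_diag, Rabs_R0, sqrt_0 in U.
    rewrite Rmax_left in U by apply Rabs_pos. exact U. }
  split.
  2:{ destruct (hqi (y0, s) (y0, t)) as [_ U]; try (split; simpl; assumption).
      unfold d_par in U; simpl in U. rewrite Rminus_diag, Rabs_R0 in U.
      rewrite (Rmax_right 0) in U by apply sqrt_pos.
      pose proof (Rmax_r (Rabs (fst (F (y0, s)) - fst (F (y0, t)))) D).
      fold X in U. fold D in U. lra. }
  destruct (Rle_or_lt (/ M * X - 2 * eps) D) as [ok | bad]; [exact ok | exfalso].
  set (v := fst (F (y0, s))). set (w := fst (F (y0, t))).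
  assert (hDts : sqrt (Rabs (snd (F (y0, t)) - snd (F (y0, s)))) = D)
    by (unfold D; rewrite Rabs_minus_sym; reflexivity).
  assert (gapt : forall y, I y -> / M * Rabs (y - y0) - eps <= Rabs (fst (F (y, t)) - v)
                                  /\ eps < Rabs (fst (F (y, t)) - v)).
  { intros y hy. destruct (hqi (y, t) (y0, s)) as [Lo _]; try (split; simpl; assumption).
    unfold d_par in Lo; simpl in Lo. rewrite (hf y t hy ht), hXts, hDts in Lo. fold v in Lo.
    assert (A1 : / M * Rabs (y - y0) <= / M * Rmax (Rabs (y - y0)) X)
      by (apply Rmult_le_compat_l; [lra | apply Rmax_l]).
    assert (A2 : / M * X <= / M * Rmax (Rabs (y - y0)) X)
      by (apply Rmult_le_compat_l; [lra | apply Rmax_r]).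
    destruct (Rmax_cases (Rabs (fst (F (y, t)) - v)) D) as [[E _] | [E _]];
      rewrite E in Lo; split; lra. }
  assert (gaps : forall y, I y -> / M * Rabs (y - y0) - eps <= Rabs (fst (F (y, s)) - w)
                                  /\ eps < Rabs (fst (F (y, s)) - w)).
  { intros y hy. destruct (hqi (y, s) (y0, t)) as [Lo _]; try (split; simpl; assumption).
    unfold d_par in Lo; simpl in Lo. rewrite (hf y s hy hs) in Lo. fold w X D in Lo.
    assert (A1 : / M * Rabs (y - y0) <= / M * Rmax (Rabs (y - y0)) X)
      by (apply Rmult_le_compat_l; [lra | apply Rmax_l]).
    assert (A2 : / M * X <= / M * Rmax (Rabs (y - y0)) X)
      by (apply Rmult_le_compat_l; [lra | apply Rmax_r]).
    destruct (Rmax_cases (Rabs (fst (F (y, s)) - w)) D) as [[E _] | [E _]];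
      rewrite E in Lo; split; lra. }
  assert (close : forall y, I y -> Rabs (fst (F (y, t)) - fst (F (y, s))) <= M * X + eps).
  { intros y hy. destruct (hqi (y, t) (y, s)) as [_ U]; try (split; simpl; assumption).
    unfold d_par in U; simpl in U. rewrite Rminus_diag, Rabs_R0, hXts in U.
    rewrite (Rmax_right 0) in U by apply sqrt_pos.
    pose proof (Rmax_l (Rabs (fst (F (y, t)) - fst (F (y, s))))
                       (sqrt (Rabs (snd (F (y, t)) - snd (F (y, s)))))). lra. }
  pose proof (coarse_conn I (fun y => fst (F (y, t))) M eps v hI he hM0 (hLip t ht)
               (fun y hy => proj2 (gapt y hy))) as Ct.
  pose proof (coarse_conn I (fun y => fst (F (y, s))) M eps w hI he hM0 (hLip s hs)
               (fun y hy => proj2 (gaps y hy))) as Cs.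
  simpl in Ct, Cs.
  pose proof (close y0 hy0) as c0. fold v w in c0.
  assert (bnd : forall y, I y -> / M * Rabs (y - y0) <= M * X + 2 * eps).
  { intros y hy. pose proof (close y hy) as cy.
    destruct (gapt y hy) as [gt1 _]. destruct (gaps y hy) as [gs1 _].
    pose proof (proj2 (gapt y0 hy0)) as g0. fold w in g0.
    pose proof (Ct y0 y hy0 hy) as Cty. pose proof (Cs y0 y hy0 hy) as Csy.
    fold v w in Cty, Csy.
    pose proof (proj2 (gapt y hy)) as gt2. pose proof (proj2 (gaps y hy)) as gs2.
    revert cy gt1 gs1 g0 Cty Csy gt2 gs2 c0.
    unfold Rabs; repeat destruct Rcase_abs; intros; try lra;
      first [ assert (v < w) by lra; intuition lra
            | assert (w < v) by lra; intuition lra ]. }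
  assert (hXL : X <= sqrt LJ).
  { unfold X. apply sqrt_le_1_alt.
    pose proof (Lub_Rbar_correct (fun d => exists x y, J x /\ J y /\ d = Rabs (x - y))) as [ub _].
    fold (ilength J) in ub. rewrite hLJ in ub. apply (ub (Rabs (s - t))). exists s, t; auto. }
  set (C := M * M * sqrt LJ + 2 * M * eps).
  assert (bnd2 : forall y, I y -> Rabs (y - y0) <= C).
  { intros y hy. pose proof (bnd y hy) as b.
    assert (M * (/ M * Rabs (y - y0)) <= M * (M * X + 2 * eps)) by (apply Rmult_le_compat_l; lra).
    rewrite <- Rmult_assoc, Rinv_r, Rmult_1_l in H by lra.
    assert (M * M * X <= M * M * sqrt LJ) by (apply Rmult_le_compat_l; nra).
    unfold C. nra. }
  assert (hIl : Rbar_le (ilength I) (Finite (2 * C))).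
  { destruct (Lub_Rbar_correct (fun d => exists x y, I x /\ I y /\ d = Rabs (x - y))) as [_ lub].
    apply lub. intros d [x [y [hx [hy ->]]]]. simpl.
    pose proof (bnd2 x hx). pose proof (bnd2 y hy).
    pose proof (Rabs_triang (x - y0) (y0 - y)).
    replace (x - y0 + (y0 - y)) with (x - y) in H1 by ring.
    rewrite Rabs_minus_sym in H0. lra. }
  unfold C in hIl. destruct (ilength I); simpl in hlen, hIl; try contradiction.
  replace (M ^ 2) with (M * M) in hlen by ring. lra.
Qed.
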